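(* Let $Q\in\mathbb{R}^{n\times n}$ be symmetric positive definite, $\|x\|=\sqrt{x^TQx}$, $\|u\|_*=\sqrt{u^TQ^{-1}u}$. Let $f\colon\mathbb{R}^n\to\mathbb{R}$ be convex and differentiable with $\|\nabla f(x)-\nabla f(y)\|_*\le L\|x-y\|$ for all $x,y$, and assume $f$ has a minimizer $x_\star$, $f_\star=f(x_\star)$. Let $w$ be differentiable and $1$-strongly convex with respect to $\|\cdot\|$, and $V_x(y)=w(y)-\langle\nabla w(x),y-x\rangle-w(x)$. Let $\{\alpha_k\}_{k=1}^\infty$ be positive with $\alpha_1=\frac2L$ and $0\le\alpha_{k+1}^2L-2\alpha_{k+1}\le\alpha_k^2L$ for $k\ge1$, and $\tau_k=\frac2{\alpha_{k+1}L}$ for $k\ge1$. Given $x_0$, let $y_0=z_0=x_0$ and for $k=0,1,\dots$ \[ y_{k+1}=x_k-L^{-1}Q^{-1}\nabla f(x_k),\quad z_{k+1}=\operatorname*{argmin}_{y}\{V_{z_k}(y)+\langle\alpha_{k+1}\nabla f(x_k),y-x_k\rangle\},\quad x_{k+1}=(1-\tau_{k+1})y_{k+1}+\tau_{k+1}z_{k+1}. \] Let $\{\tilde\alpha_k\}_{k=1}^\infty$ be positive with $\tilde\alpha_1=\frac1L$ and $0\le\tilde\alpha_{k+1}^2L-\tilde\alpha_{k+1}\le\frac12\alpha_k^2L$ for $k\ge1$, let $\tilde\tau_k=\frac{1}{\tilde\alpha_{k+1}L}$ and $\tilde x_k=(1-\tilde\tau_k)y_k+\tilde\tau_kz_k$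 for $k\ge0$. Then for $k=0,1,\dots$, \[ f(\tilde x_k)-f_\star\le\frac{V_{x_0}(x_\star)}{L\tilde\alpha_{k+1}^2}. \]
   Context: $\langle\cdot,\cdot\rangle$ is the standard Euclidean inner product. ''$1$-strongly convex with respect to $\|\cdot\|$'' means $w(y)\ge w(x)+\langle\nabla w(x),y-x\rangle+\frac12\|y-x\|^2$ for all $x,y$. *)

(* Defs.v *)
From HB Require Import structures.
From mathcomp Require Import all_boot all_order all_algebra.
From mathcomp Require Import all_classical all_reals all_analysis.
Import Order.TTheory GRing.Theory Num.Theory.
Import numFieldNormedType.Exports.
Set Implicit Arguments. Unset Strict Implicit. Unset Printing Implicit Defensive.
Local Open Scope ring_scope.

Definition ip {R : realType} {n : nat} (u v : 'cV[R]_n) : R :=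
  \sum_(i < n) u i 0 * v i 0.

Definition sym_posdef {R : realType} {n : nat} (Q : 'M[R]_n) : Prop :=
  Q^T = Q /\ forall v : 'cV[R]_n, v != 0 -> 0 < ip v (Q *m v).

Definition qnorm {R : realType} {n : nat} (Q : 'M[R]_n) (x : 'cV[R]_n) : R :=
  Num.sqrt (ip x (Q *m x)).

Definition dnorm {R : realType} {n : nat} (Q : 'M[R]_n) (u : 'cV[R]_n) : R :=
  Num.sqrt (ip u (invmx Q *m u)).

Definition is_gradient {R : realType} {n : nat}
  (f : 'cV[R]_n -> R) (g : 'cV[R]_n -> 'cV[R]_n) : Prop :=
  forall x, differentiable f x /\ forall h, 'd f x h = ip (g x) h.

Definition convex_fn {R : realType} {n : nat} (f : 'cV[R]_n -> R) : Prop :=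
  forall (x y : 'cV[R]_n) (t : R), 0 <= t -> t <= 1 ->
    f ((1 - t) *: x + t *: y) <= (1 - t) * f x + t * f y.

Definition strongly_convex1 {R : realType} {n : nat} (Q : 'M[R]_n)
  (w : 'cV[R]_n -> R) (gw : 'cV[R]_n -> 'cV[R]_n) : Prop :=
  forall x y, w x + ip (gw x) (y - x) + 2^-1 * qnorm Q (y - x) ^+ 2 <= w y.

Definition bregman {R : realType} {n : nat}
  (w : 'cV[R]_n -> R) (gw : 'cV[R]_n -> 'cV[R]_n) (x y : 'cV[R]_n) : R :=
  w y - ip (gw x) (y - x) - w x.

(* Main.v *)
Require Import Defs.
From HB Require Import structures.
From mathcomp Require Import all_boot all_order all_algebra.
From mathcomp Require Import all_classical all_reals all_analysis.
From mathcomp Require Import ring lra.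
Import Order.TTheory GRing.Theory Num.Theory.
Import numFieldNormedType.Exports.
Local Open Scope ring_scope.


Lemma ipE {R : realType} {n : nat} (u v : 'cV[R]_n) : ip u v = (u^T *m v) 0 0.
Proof. by rewrite /ip !mxE; apply: eq_bigr => i _; rewrite mxE. Qed.

Lemma ipC {R : realType} {n : nat} (u v : 'cV[R]_n) : ip u v = ip v u.
Proof. by rewrite /ip; apply: eq_bigr => i _; rewrite mulrC. Qed.

Lemma ipDl {R : realType} {n : nat} (u v w : 'cV[R]_n) : ip (u + v) w = ip u w + ip v w.
Proof. by rewrite /ip -big_split; apply: eq_bigr => i _; rewrite mxE mulrDl. Qed.

Lemma ipZl {R : realType} {n : nat} (a : R) (u w : 'cV[R]_n) : ip (a *: u) w = a * ip u w.
Proof. by rewrite /ip mulr_sumr; apply: eq_bigr => i _; rewrite mxE mulrA. Qed.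

Lemma ipNl {R : realType} {n : nat} (u w : 'cV[R]_n) : ip (- u) w = - ip u w.
Proof. by rewrite -scaleN1r ipZl mulN1r. Qed.

Lemma ipBl {R : realType} {n : nat} (u v w : 'cV[R]_n) : ip (u - v) w = ip u w - ip v w.
Proof. by rewrite ipDl ipNl. Qed.

Lemma ipDr {R : realType} {n : nat} (u v w : 'cV[R]_n) : ip w (u + v) = ip w u + ip w v.
Proof. by rewrite ipC ipDl ipC (ipC v). Qed.
Lemma ipZr {R : realType} {n : nat} (a : R) (u w : 'cV[R]_n) : ip w (a *: u) = a * ip w u.
Proof. by rewrite ipC ipZl ipC. Qed.
Lemma ipNr {R : realType} {n : nat} (u w : 'cV[R]_n) : ip w (- u) = - ip w u.
Proof. by rewrite ipC ipNl ipC. Qed.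
Lemma ipBr {R : realType} {n : nat} (u v w : 'cV[R]_n) : ip w (u - v) = ip w u - ip w v.
Proof. by rewrite ipDr ipNr. Qed.
Lemma ip0l {R : realType} {n : nat} (w : 'cV[R]_n) : ip 0 w = 0.
Proof. by rewrite -(scale0r (0 : 'cV[R]_n)) ipZl mul0r. Qed.
Lemma ip0r {R : realType} {n : nat} (w : 'cV[R]_n) : ip w 0 = 0.
Proof. by rewrite ipC ip0l. Qed.

Lemma ipM {R : realType} {n : nat} (A : 'M[R]_n) (u v : 'cV[R]_n) :
  ip u (A *m v) = ip (A^T *m u) v.
Proof. by rewrite !ipE trmx_mul trmxK mulmxA. Qed.

Lemma ip_self_ge0 {R : realType} {n : nat} (u : 'cV[R]_n) : 0 <= ip u u.
Proof. by rewrite /ip sumr_ge0 // => i _; rewrite -expr2 sqr_ge0. Qed.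

Lemma ip_self_eq0 {R : realType} {n : nat} (u : 'cV[R]_n) : ip u u <= 0 -> u = 0.
Proof.
move=> H.
have H0 : \sum_(i < n) u i 0 * u i 0 = 0 by apply/eqP; rewrite eq_le H ip_self_ge0.
apply/matrixP => i j; rewrite mxE (ord1 j).
have Hi := @psumr_eq0P _ _ xpredT (fun k => u k 0 * u k 0) _ H0 i isT.
have /eqP : u i 0 * u i 0 = 0 by apply: Hi => k _; rewrite -expr2 sqr_ge0.
by rewrite -expr2 sqrf_eq0 => /eqP.
Qed.


Lemma posdef_ker {R : realType} {n : nat} {Q : 'M[R]_n} (v : 'cV[R]_n) :
  sym_posdef Q -> Q *m v = 0 -> v = 0.
Proof.
move=> [_ HQ] Hv; apply/eqP; apply/negPn/negP => /HQ.
by rewrite Hv ip0r ltxx.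
Qed.

Lemma posdef_unit {R : realType} {n : nat} {Q : 'M[R]_n} :
  sym_posdef Q -> Q \in unitmx.
Proof.
move=> HQ; have [QT _] := HQ.
rewrite -row_free_unit -QT -kermx_eq0; apply/eqP/row_matrixP => i.
rewrite row0; set r := row i _.
have H1 : r *m Q^T = 0 by rewrite /r -row_mul mulmx_ker row0.
have H2 : Q *m r^T = 0 by rewrite -[Q]trmxK -trmx_mul H1 trmx0.
by rewrite -[r]trmxK (posdef_ker _ HQ H2) trmx0.
Qed.

Lemma inv_sym {R : realType} {n : nat} {Q : 'M[R]_n} :
  sym_posdef Q -> (invmx Q)^T = invmx Q.
Proof. by move=> [QT _]; rewrite trmx_inv QT. Qed.

Definition NN {R : realType} {n : nat} (Q : 'M[R]_n) (v : 'cV[R]_n) := ip v (Q *m v).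
Definition DD {R : realType} {n : nat} (Q : 'M[R]_n) (v : 'cV[R]_n) := ip v (invmx Q *m v).

Lemma NN_ge0 {R : realType} {n : nat} {Q : 'M[R]_n} v : sym_posdef Q -> 0 <= NN Q v.
Proof.
move=> [_ HQ]; have [->|/HQ/ltW //] := eqVneq v 0.
by rewrite /NN ip0l.
Qed.

Lemma DD_NN {R : realType} {n : nat} {Q : 'M[R]_n} u : sym_posdef Q ->
  DD Q u = NN Q (invmx Q *m u).
Proof.
move=> HQ; rewrite /NN /DD mulKVmx ?posdef_unit // ipC //.
Qed.

Lemma DD_ge0 {R : realType} {n : nat} {Q : 'M[R]_n} u : sym_posdef Q -> 0 <= DD Q u.
Proof. by move=> HQ; rewrite DD_NN // NN_ge0. Qed.

Lemma qnorm2 {R : realType} {n : nat} {Q : 'M[R]_n} v : sym_posdef Q ->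
  qnorm Q v ^+ 2 = NN Q v.
Proof. by move=> HQ; rewrite /qnorm sqr_sqrtr // NN_ge0. Qed.

Lemma dnorm2 {R : realType} {n : nat} {Q : 'M[R]_n} v : sym_posdef Q ->
  dnorm Q v ^+ 2 = DD Q v.
Proof. by move=> HQ; rewrite /dnorm sqr_sqrtr // DD_ge0. Qed.

Lemma young {R : realType} {n : nat} {Q : 'M[R]_n} (a : R) (u v : 'cV[R]_n) :
  sym_posdef Q -> 0 < a -> ip u v <= a / 2 * DD Q u + (2 * a)^-1 * NN Q v.
Proof.
move=> HQ a0; have [QT _] := HQ.
have Hu := posdef_unit HQ.
have := NN_ge0 (a *: (invmx Q *m u) - v) HQ.
rewrite /NN mulmxBr -scalemxAr mulKVmx // !ipBl !ipBr !ipZl !ipZr.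
rewrite (ipM Q (invmx Q *m u)) QT mulKVmx // (ipC v u).
rewrite (ipC (invmx Q *m u) u) -/(DD Q u) -/(NN Q v) => H.
rewrite -subr_ge0.
have -> : a / 2 * DD Q u + (2 * a)^-1 * NN Q v - ip u v =
  (2 * a)^-1 * (a * (a * DD Q u) - a * ip u v - (a * ip u v - NN Q v)).
  by field; rewrite gt_eqF.
by rewrite mulr_ge0 // invr_ge0 mulr_ge0 // ltW.
Qed.

Local Open Scope classical_set_scope.
Local Open Scope ring_scope.

Lemma dir_cvg {R : realType} {n : nat} (f : 'cV[R]_n -> R) g x v :
  is_gradient f g ->
  (fun h : R => h^-1 *: ((f \o shift x) (h *: v) - f x)) @ 0^'+ --> ip (g x) v.
Proof.
move=> Hg; have [df dg] := Hg x.
have dv : derivable f x v := diff_derivable (v:=v) df.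
have hD : derive f x v = ip (g x) v by rewrite deriveE // dg.
rewrite -hD.
have H0 : (fun h : R => h^-1 *: ((f \o shift x) (h *: v) - f x)) @ 0^' --> derive f x v
  by exact: dv.
apply: cvg_trans H0 => A /= HA.
move: HA => /nbhs_ballP [_ /posnumP[e] xe_A].
by exists e%:num => //= y xe_y /gt_eqF/negbT/xe_A; exact.
Qed.

Lemma dir_ge {R : realType} {n : nat} (f : 'cV[R]_n -> R) g x v c :
  is_gradient f g ->
  (forall t : R, 0 < t -> t <= 1 -> t * c <= f (x + t *: v) - f x) ->
  c <= ip (g x) v.
Proof.
move=> Hg H; 
apply: (cvgr_to_ge (dir_cvg _ _ x v Hg)).
near=> h.
have h0 : 0 < h by near: h; exact: nbhs_right_gt.
have h1 : h <= 1 by near: h; exact: nbhs_right_le.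
rewrite /= (addrC (h *: v) x) -(ler_pM2l h0) mulrA mulfV ?gt_eqF // mul1r.
exact: H.
Unshelve. all: by end_near.
Qed.

Lemma dir_le {R : realType} {n : nat} (f : 'cV[R]_n -> R) g x v c :
  is_gradient f g ->
  (forall t : R, 0 < t -> t <= 1 -> f (x + t *: v) - f x <= t * c) ->
  ip (g x) v <= c.
Proof.
move=> Hg H; apply: (cvgr_to_le (dir_cvg _ _ x v Hg)).
near=> h.
have h0 : 0 < h by near: h; exact: nbhs_right_gt.
have h1 : h <= 1 by near: h; exact: nbhs_right_le.
rewrite /= (addrC (h *: v) x) -(ler_pM2l h0) mulrA mulfV ?gt_eqF // mul1r.
exact: H.
Unshelve. all: by end_near.
Qed.

Local Close Scope classical_set_scope.
Local Open Scope ring_scope.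


Lemma archi_lim {R : realType} (A B C : R) : 0 <= C ->
  (forall m : nat, A <= B + C / (m.+1)%:R) -> A <= B.
Proof.
move=> C0 H; rewrite leNgt; apply/negP => AB.
have e0 : 0 < A - B by rewrite subr_gt0.
set m := Num.Def.trunc (C / (A - B)).
have Hm := truncnS_gt (C / (A - B)); rewrite -/m in Hm.
have m0 : 0 < (m.+1)%:R :> R by rewrite ltr0n.
have : C / (m.+1)%:R < A - B.
  by rewrite ltr_pdivrMr // mulrC -ltr_pdivrMr.
have := H m; move: (C / _) => q; lra.
Qed.

Lemma grad_ineq {R : realType} {n : nat} (f : 'cV[R]_n -> R) g :
  convex_fn f -> is_gradient f g -> forall x u, f x + ip (g x) (u - x) <= f u.
Proof.
move=> Hc Hg x u.
suff : ip (g x) (u - x) <= f u - f x by lra.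
apply: dir_le Hg _ => t t0 t1.
have -> : x + t *: (u - x) = (1 - t) *: x + t *: u.
  by rewrite scalerBr scalerBl scale1r addrCA addrC -addrA [- _ + _]addrC.
have := Hc x u t (ltW t0) t1; lra.
Qed.

Lemma grad_min {R : realType} {n : nat} (f : 'cV[R]_n -> R) g xs :
  is_gradient f g -> (forall u, f xs <= f u) -> g xs = 0.
Proof.
move=> Hg Hm.
have H : 0 <= ip (g xs) (- g xs).
  by apply: (@dir_ge _ _ f g xs (- g xs) 0 Hg) => t _ _; rewrite mulr0 subr_ge0.
by apply: ip_self_eq0; rewrite -oppr_ge0 -ipNr.
Qed.

Lemma NN_scale {R : realType} {n : nat} (Q : 'M[R]_n) (a : R) v :
  NN Q (a *: v) = a ^+ 2 * NN Q v.
Proof. by rewrite /NN -scalemxAr ipZl ipZr mulrA expr2. Qed.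

Lemma lip_bound {R : realType} {n : nat} (Q : 'M[R]_n) (L : R) g x d s :
  sym_posdef Q -> 0 < L ->
  (forall u v, DD Q (g u - g v) <= L ^+ 2 * NN Q (u - v)) -> 0 < s ->
  ip (g (x + s *: d) - g x) d <= L * s * NN Q d.
Proof.
move=> HQ L0 HL s0.
have Ls : 0 < L * s by rewrite mulr_gt0.
have Li : 0 < (L * s)^-1 by rewrite invr_gt0.
have := young _ (g (x + s *: d) - g x) d HQ Li.
have := HL (x + s *: d) x; rewrite addrAC subrr add0r NN_scale => H1.
have N0 := NN_ge0 d HQ.
have D0 := DD_ge0 (g (x + s *: d) - g x) HQ.
move: (DD Q _) H1 D0 => D H1 D0 H.
apply: (le_trans H).
rewrite invf_div.
have : (L * s)^-1 / 2 * D <= (L * s)^-1 / 2 * (L ^+ 2 * (s ^+ 2 * NN Q d)).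
  by rewrite ler_pM2l // divr_gt0 // invr_gt0.
have -> : (L * s)^-1 / 2 * (L ^+ 2 * (s ^+ 2 * NN Q d)) = L * s / 2 * NN Q d.
  by field; rewrite ?gt_eqF.
have -> : L * s * NN Q d = L * s / 2 * NN Q d + L * s / 2 * NN Q d by field.
move: (L * s / 2 * NN Q d) => q; move: ((L * s)^-1 / 2 * D) => p.
lra.
Qed.

Lemma seg_step {R : realType} {n : nat} (Q : 'M[R]_n) (L : R) f g x d t t' :
  sym_posdef Q -> 0 < L -> convex_fn f -> is_gradient f g ->
  (forall u v, DD Q (g u - g v) <= L ^+ 2 * NN Q (u - v)) -> 0 < t' -> t <= t' ->
  f (x + t' *: d) - f (x + t *: d) <= (t' - t) * ip (g x) d + (t' - t) * (L * t' * NN Q d).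
Proof.
move=> HQ L0 Hc Hg HL t0 tt.
have G := grad_ineq _ _ Hc Hg (x + t' *: d) (x + t *: d).
have E : (x + t *: d) - (x + t' *: d) = (t - t') *: d.
  by rewrite scalerBl opprD addrACA subrr add0r.
rewrite E ipZr in G.
have Hb := lip_bound Q L g x d t' HQ L0 HL t0.
rewrite ipBl in Hb.
have tt0 : 0 <= t' - t by rewrite subr_ge0.
have := ler_wpM2l tt0 Hb.
move: (ip (g (x + t' *: d)) d) (ip (g x) d) G => a b G.
rewrite mulrBr => H.
have E2 : t - t' = - (t' - t) by rewrite opprB.
rewrite E2 mulNr in G.
move: (t' - t) H G tt0 => c H G tt0.
lra.
Qed.

Lemma descent {R : realType} {n : nat} (Q : 'M[R]_n) (L : R) f g :
  sym_posdef Q -> 0 < L -> convex_fn f -> is_gradient f g ->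
  (forall u v, DD Q (g u - g v) <= L ^+ 2 * NN Q (u - v)) ->
  forall x y, f y <= f x + ip (g x) (y - x) + L / 2 * NN Q (y - x).
Proof.
move=> HQ L0 Hc Hg HL x y.
set d := y - x.
have N0 := NN_ge0 d HQ.
suff H : forall m : nat, f y - f x <= ip (g x) d + L / 2 * NN Q d + (L / 2 * NN Q d) / (m.+1)%:R.
  have := archi_lim _ _ _ (mulr_ge0 (divr_ge0 (ltW L0) (ler0n _ 2)) N0) H; lra.
move=> m.
set M : R := (m.+1)%:R.
have M0 : 0 < M by rewrite ltr0n.
have P : forall j : nat, f (x + (j%:R / M) *: d) - f x <=
   (j%:R / M) * ip (g x) d + L * NN Q d * (j%:R * (j%:R + 1)) / (2 * M ^+ 2).
  elim=> [|j IH].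
    by rewrite mul0r scale0r addr0 subrr mul0r mul0r mulr0 mul0r addr0.
  have S := seg_step Q L f g x d (j%:R / M) (j.+1%:R / M) HQ L0 Hc Hg HL.
  have Hj : 0 < j.+1%:R / M by rewrite divr_gt0 // ltr0n.
  have Hjj : j%:R / M <= j.+1%:R / M by rewrite ler_pM2r ?invr_gt0 // ler_nat.
  have := S Hj Hjj.
  have -> : j.+1%:R / M - j%:R / M = 1 / M by rewrite -mulrBl -natrB // subSnn.
  have -> : j.+1%:R / M * ip (g x) d = j%:R / M * ip (g x) d + 1 / M * ip (g x) d.
    by rewrite -mulrDl -mulrDl natr1.
  have -> : L * NN Q d * (j.+1%:R * (j.+1%:R + 1)) / (2 * M ^+ 2) =
     L * NN Q d * (j%:R * (j%:R + 1)) / (2 * M ^+ 2) + 1 / M * (L * (j.+1%:R / M) * NN Q d).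
    by rewrite -natr1; field; rewrite gt_eqF.
  move: IH; move: (f (x + j%:R / M *: d)) (f (x + j.+1%:R / M *: d)).
  move=> a b.
  move: (j%:R / M * ip (g x) d) (L * NN Q d * (j%:R * (j%:R + 1)) / (2 * M ^+ 2))
        (1 / M * ip (g x) d) (1 / M * (L * (j.+1%:R / M) * NN Q d)) => p1 p2 p3 p4.
  lra.
have := P m.+1; rewrite -/M divff ?gt_eqF // scale1r.
have -> : x + d = y by rewrite /d addrC subrK.
have -> : L * NN Q d * (M * (M + 1)) / (2 * M ^+ 2) = L / 2 * NN Q d + L / 2 * NN Q d / M.
  by field; rewrite gt_eqF.
by rewrite mul1r addrA.
Qed.


Lemma lip_sq {R : realType} {n : nat} (Q : 'M[R]_n) (L : R) g :
  sym_posdef Q -> 0 < L ->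
  (forall u v, dnorm Q (g u - g v) <= L * qnorm Q (u - v)) ->
  (forall u v, DD Q (g u - g v) <= L ^+ 2 * NN Q (u - v)).
Proof.
move=> HQ L0 H u v.
rewrite -dnorm2 // -qnorm2 // -exprMn.
have h0 : 0 <= dnorm Q (g u - g v) by rewrite /dnorm sqrtr_ge0.
by rewrite !expr2 ler_pM // H.
Qed.

Lemma NN_invg {R : realType} {n : nat} (Q : 'M[R]_n) (c : R) e :
  sym_posdef Q -> NN Q (c *: (invmx Q *m e)) = c ^+ 2 * DD Q e.
Proof. by move=> HQ; rewrite NN_scale DD_NN. Qed.

Lemma ip_invg {R : realType} {n : nat} (Q : 'M[R]_n) (c : R) e :
  ip e (c *: (invmx Q *m e)) = c * DD Q e.
Proof. by rewrite ipZr. Qed.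

Lemma gstep {R : realType} {n : nat} (Q : 'M[R]_n) (L : R) f g :
  sym_posdef Q -> 0 < L -> convex_fn f -> is_gradient f g ->
  (forall u v, DD Q (g u - g v) <= L ^+ 2 * NN Q (u - v)) ->
  forall x, f (x - L^-1 *: (invmx Q *m g x)) <= f x - (2 * L)^-1 * DD Q (g x).
Proof.
move=> HQ L0 Hc Hg HL x.
have := descent Q L f g HQ L0 Hc Hg HL x (x - L^-1 *: (invmx Q *m g x)).
have E : x - L^-1 *: (invmx Q *m g x) - x = - L^-1 *: (invmx Q *m g x).
  by rewrite addrAC subrr add0r scaleNr.
rewrite E NN_invg // ip_invg.
have -> : L / 2 * ((- L^-1) ^+ 2 * DD Q (g x)) = (2 * L)^-1 * DD Q (g x).
  by field; rewrite gt_eqF.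
have -> : - L^-1 * DD Q (g x) = - ((2 * L)^-1 * DD Q (g x)) - (2 * L)^-1 * DD Q (g x).
  by field; rewrite gt_eqF.
move: ((2 * L)^-1 * DD Q (g x)) => p; lra.
Qed.

Lemma cocoercive {R : realType} {n : nat} (Q : 'M[R]_n) (L : R) f g :
  sym_posdef Q -> 0 < L -> convex_fn f -> is_gradient f g ->
  (forall u v, DD Q (g u - g v) <= L ^+ 2 * NN Q (u - v)) ->
  forall x u, f x + ip (g x) (u - x) + (2 * L)^-1 * DD Q (g u - g x) <= f u.
Proof.
move=> HQ L0 Hc Hg HL x u.
set e := g u - g x.
set q := u - L^-1 *: (invmx Q *m e).
have H1 := descent Q L f g HQ L0 Hc Hg HL u q.
have H2 := grad_ineq _ _ Hc Hg x q.
have Eq : q - u = - L^-1 *: (invmx Q *m e) by rewrite /q addrAC subrr add0r scaleNr.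
have Eq2 : q - x = (q - u) + (u - x).
  by rewrite subrKA.
rewrite Eq NN_invg // in H1.
rewrite Eq2 Eq ipDr in H2.
have E3 : ip (g u) (- L^-1 *: (invmx Q *m e)) = ip (g x) (- L^-1 *: (invmx Q *m e)) + - L^-1 * DD Q e.
  by rewrite -ip_invg -ipDl /e (addrC (g x)) subrK.
rewrite E3 in H1.
have -> : (2 * L)^-1 * DD Q e = - (- L^-1 * DD Q e) - L / 2 * ((- L^-1) ^+ 2 * DD Q e).
  by field; rewrite gt_eqF.
move: (ip (g x) _) (- L^-1 * DD Q e) (L / 2 * ((- L^-1) ^+ 2 * DD Q e)) H1 H2 => a b c H1 H2.
lra.
Qed.


Lemma mirror_opt {R : realType} {n : nat} (w : 'cV[R]_n -> R) gw (a : R) gg xk z p :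
  is_gradient w gw ->
  (forall u, bregman w gw z p + ip (a *: gg) (p - xk)
               <= bregman w gw z u + ip (a *: gg) (u - xk)) ->
  forall u, ip (gw z) (u - p) - a * ip gg (u - p) <= ip (gw p) (u - p).
Proof.
move=> Hw Hmin u.
apply: (dir_ge w gw p (u - p)) => // t t0 t1.
have := Hmin (p + t *: (u - p)).
rewrite -ipZl /bregman !ipBr !ipDr !ipZr !ipBr.
move: (ip (gw z) u) (ip (gw z) p) (ip (a *: gg) u) (ip (a *: gg) p) (ip (gw z) z) (ip (a *: gg) xk) => a1 a2 a3 a4 a5 a6.
move: (w (p + t *: (u - p))) (w p) (w z) => b1 b2 b3.
rewrite !mulrBr.
move: (t * a1) (t * a2) (t * a3) (t * a4) => c1 c2 c3 c4.
move=> H; lra.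
Qed.

Lemma mirror_bound {R : realType} {n : nat} (Q : 'M[R]_n) (w : 'cV[R]_n -> R) gw (a : R) gg xk z p xs :
  sym_posdef Q -> is_gradient w gw -> strongly_convex1 Q w gw -> 0 < a ->
  (forall u, bregman w gw z p + ip (a *: gg) (p - xk)
               <= bregman w gw z u + ip (a *: gg) (u - xk)) ->
  bregman w gw p xs <= bregman w gw z xs - a * ip gg (z - xs) + a ^+ 2 / 2 * DD Q gg.
Proof.
move=> HQ Hw Hsc a0 Hmin.
have O := mirror_opt w gw a gg xk z p Hw Hmin xs.
have S := Hsc z p; rewrite qnorm2 // in S.
have Y := young _ gg (z - p) HQ a0.
have Ezp : NN Q (z - p) = NN Q (p - z).
  by rewrite -[z - p]opprB -scaleN1r NN_scale sqrrN expr1n mul1r.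
rewrite Ezp in Y.
have Y' := ler_wpM2l (ltW a0) Y.
have E : a * (a / 2 * DD Q gg + (2 * a)^-1 * NN Q (p - z)) =
   a ^+ 2 / 2 * DD Q gg + 2^-1 * NN Q (p - z).
  by field; rewrite gt_eqF.
rewrite E in Y'.
rewrite /bregman.
move: O S Y'; rewrite !ipBr !mulrBr.
move: (a * ip gg xs) (a * ip gg p) (a * ip gg z) => c1 c2 c3.
move: (a ^+ 2 / 2 * DD Q gg) (2^-1 * NN Q (p - z)) => d1 d2.
move=> O S Y'; lra.
Qed.


Lemma DD_sub {R : realType} {n : nat} (Q : 'M[R]_n) a b : sym_posdef Q ->
  DD Q (a - b) = DD Q a - 2 * ip b (invmx Q *m a) + DD Q b.
Proof.
move=> HQ; rewrite /DD mulmxBr !ipBl !ipBr.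
have -> : ip a (invmx Q *m b) = ip b (invmx Q *m a).
  by rewrite ipM inv_sym // ipC.
ring.
Qed.

Lemma Bbound {R : realType} {n : nat} (Q : 'M[R]_n) (L : R) f g xs xp x :
  sym_posdef Q -> 0 < L -> convex_fn f -> is_gradient f g ->
  (forall u v, DD Q (g u - g v) <= L ^+ 2 * NN Q (u - v)) ->
  ip (g x) (xp - L^-1 *: (invmx Q *m g xp) - x) + (f x - f xs) + (2 * L)^-1 * DD Q (g x)
   <= (f xp - f xs) - (2 * L)^-1 * DD Q (g xp).
Proof.
move=> HQ L0 Hc Hg HL.
have H := cocoercive Q L f g HQ L0 Hc Hg HL x xp.
rewrite DD_sub // in H.
rewrite (addrAC xp) ipDr ipNr ipZr.
move: H; rewrite -/(ip (g x) (xp - x)).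
move: (ip (g x) (xp - x)) (ip (g x) (invmx Q *m g xp)) (DD Q (g xp)) (DD Q (g x)) => a b c d.
have -> : (2 * L)^-1 * (c - 2 * b + d) = (2 * L)^-1 * c - L^-1 * b + (2 * L)^-1 * d.
  by field; rewrite gt_eqF.
move: ((2 * L)^-1 * c) (L^-1 * b) ((2 * L)^-1 * d) => c' b' d'.
move=> H; lra.
Qed.

Lemma Hnonneg {R : realType} {n : nat} (Q : 'M[R]_n) (L : R) f g xs x :
  sym_posdef Q -> 0 < L -> convex_fn f -> is_gradient f g ->
  (forall u v, DD Q (g u - g v) <= L ^+ 2 * NN Q (u - v)) ->
  (forall u, f xs <= f u) ->
  0 <= f x - f xs - (2 * L)^-1 * DD Q (g x).
Proof.
move=> HQ L0 Hc Hg HL Hm.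
have := gstep Q L f g HQ L0 Hc Hg HL x.
have := Hm (x - L^-1 *: (invmx Q *m g x)).
move: (f _) (f _) (f xs) => a b c; lra.
Qed.


Lemma DD_neg {R : realType} {n : nat} (Q : 'M[R]_n) a : DD Q (- a) = DD Q a.
Proof. by rewrite /DD mulmxN ipNl ipNr opprK. Qed.

Lemma cc_min {R : realType} {n : nat} (Q : 'M[R]_n) (L : R) f g xs x :
  sym_posdef Q -> 0 < L -> convex_fn f -> is_gradient f g ->
  (forall u v, DD Q (g u - g v) <= L ^+ 2 * NN Q (u - v)) ->
  (forall u, f xs <= f u) ->
  f x + (ip (g x) xs - ip (g x) x) + (2 * L)^-1 * DD Q (g x) <= f xs.
Proof.
move=> HQ L0 Hc Hg HL Hm.
have := cocoercive Q L f g HQ L0 Hc Hg HL x xs.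
by rewrite (grad_min f g xs Hg Hm) sub0r DD_neg ipBr.
Qed.

Lemma ip_comb {R : realType} {n : nat} (gg y z : 'cV[R]_n) (t : R) :
  ip gg ((1 - t) *: y + t *: z) = (1 - t) * ip gg y + t * ip gg z.
Proof. by rewrite ipDr !ipZr. Qed.

Lemma step_pot {R : realType} {n : nat} (Q : 'M[R]_n) (L : R) f g w gw xs
  (a : R) xk yk zk zk1 (B : R) :
  sym_posdef Q -> 0 < L -> convex_fn f -> is_gradient f g ->
  (forall u v, DD Q (g u - g v) <= L ^+ 2 * NN Q (u - v)) ->
  (forall u, f xs <= f u) ->
  is_gradient w gw -> strongly_convex1 Q w gw -> 0 < a ->
  xk = (1 - 2 / (a * L)) *: yk + (2 / (a * L)) *: zk ->
  (forall u, bregman w gw zk zk1 + ip (a *: g xk) (zk1 - xk)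
               <= bregman w gw zk u + ip (a *: g xk) (u - xk)) ->
  (a ^+ 2 * L / 2 - a) * (ip (g xk) (yk - xk) + (f xk - f xs) + (2 * L)^-1 * DD Q (g xk))
     <= (a ^+ 2 * L / 2 - a) * B ->
  a ^+ 2 * L / 2 * (f xk - f xs - (2 * L)^-1 * DD Q (g xk)) + bregman w gw zk1 xs
     <= bregman w gw zk xs + (a ^+ 2 * L / 2 - a) * B.
Proof.
move=> HQ L0 Hc Hg HL Hm Hw Hsc a0 Ex Hmin Hcb.
have M := mirror_bound Q w gw a (g xk) xk zk zk1 xs HQ Hw Hsc a0 Hmin.
have CC := cc_min Q L f g xs xk HQ L0 Hc Hg HL Hm.
have Ei : ip (g xk) xk = (1 - 2 / (a * L)) * ip (g xk) yk + 2 / (a * L) * ip (g xk) zk.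
  by rewrite -ip_comb -Ex.
have aL : a * L != 0 by rewrite mulf_neq0 // gt_eqF.
have Ez : ip (g xk) zk = (ip (g xk) xk - (1 - 2 / (a * L)) * ip (g xk) yk) / (2 / (a * L)).
  by rewrite Ei addrAC subrr add0r mulrAC divff ?mul1r // mulf_neq0 // invr_neq0.
rewrite ipBr Ez in M.
rewrite ipBr in Hcb.
move: M CC Hcb.
move: (ip (g xk) xk) (ip (g xk) yk) (ip (g xk) xs) (DD Q (g xk)) (f xk) (f xs)
  (bregman w gw zk1 xs) (bregman w gw zk xs) => ix iy ixs D fx fs V1 V0.
move=> M CC Hcb.
rewrite -subr_ge0.
set s1 := V0 - a * ((ix - (1 - 2 / (a * L)) * iy) / (2 / (a * L)) - ixs) + a ^+ 2 / 2 * D - V1.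
set s2 := fs - (fx + (ixs - ix) + (2 * L)^-1 * D).
set s3 := (a ^+ 2 * L / 2 - a) * B - (a ^+ 2 * L / 2 - a) * (iy - ix + (fx - fs) + (2 * L)^-1 * D).
have -> : V0 + (a ^+ 2 * L / 2 - a) * B - (a ^+ 2 * L / 2 * (fx - fs - (2 * L)^-1 * D) + V1)
   = s1 + a * s2 + s3.
  by rewrite /s1 /s2 /s3; field; rewrite ?gt_eqF.
have h1 : 0 <= s1 by rewrite /s1 subr_ge0.
have h2 : 0 <= s2 by rewrite /s2 subr_ge0.
have h3 : 0 <= s3 by rewrite /s3 subr_ge0.
by rewrite addr_ge0 // addr_ge0 // mulr_ge0 // ltW.
Qed.

Lemma final_pot {R : realType} {n : nat} (Q : 'M[R]_n) (L : R) f g w gw xs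
  (a : R) y z (B : R) :
  sym_posdef Q -> 0 < L -> convex_fn f -> is_gradient f g ->
  (forall u v, DD Q (g u - g v) <= L ^+ 2 * NN Q (u - v)) ->
  (forall u, f xs <= f u) ->
  strongly_convex1 Q w gw -> 0 < a ->
  let xt := (1 - 1 / (a * L)) *: y + (1 / (a * L)) *: z in
  (a ^+ 2 * L - a) * (ip (g xt) (y - xt) + (f xt - f xs) + (2 * L)^-1 * DD Q (g xt))
     <= (a ^+ 2 * L - a) * B ->
  a ^+ 2 * L * (f xt - f xs) <= bregman w gw z xs + (a ^+ 2 * L - a) * B.
Proof.
move=> HQ L0 Hc Hg HL Hm Hsc a0 xt Hcb.
have CC := cc_min Q L f g xs xt HQ L0 Hc Hg HL Hm.
have Y := young _ (g xt) (z - xs) HQ a0.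
have S := Hsc z xs; rewrite qnorm2 // in S.
have Ezp : NN Q (z - xs) = NN Q (xs - z).
  by rewrite -[z - xs]opprB -scaleN1r NN_scale sqrrN expr1n mul1r.
rewrite Ezp in Y.
have Y' := ler_wpM2l (ltW a0) Y.
have E : a * (a / 2 * DD Q (g xt) + (2 * a)^-1 * NN Q (xs - z)) =
   a ^+ 2 / 2 * DD Q (g xt) + 2^-1 * NN Q (xs - z).
  by field; rewrite gt_eqF.
rewrite E in Y'.
have Ei : ip (g xt) xt = (1 - 1 / (a * L)) * ip (g xt) y + 1 / (a * L) * ip (g xt) z.
  by rewrite -ip_comb.
have aL : a * L != 0 by rewrite mulf_neq0 // gt_eqF.
have t0 : 1 / (a * L) != 0 by rewrite div1r invr_neq0.
have Ez : ip (g xt) z = (ip (g xt) xt - (1 - 1 / (a * L)) * ip (g xt) y) / (1 / (a * L)).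
  by rewrite Ei addrAC subrr add0r mulrAC (divff t0) mul1r.
rewrite ipBr Ez in Y'.
rewrite ipBr in Hcb.
have V0 : 2^-1 * NN Q (xs - z) <= bregman w gw z xs.
  by rewrite /bregman; move: S; move: (w z) (w xs) (ip _ _) => p q r; lra.
move: Y' CC Hcb V0.
move: (ip (g xt) xt) (ip (g xt) y) (ip (g xt) xs) (DD Q (g xt)) (f xt) (f xs)
  (bregman w gw z xs) (2^-1 * NN Q (xs - z)) => ix iy ixs D fx fs V0 N.
move=> Y' CC Hcb HV.
rewrite -subr_ge0.
set s2 := fs - (fx + (ixs - ix) + (2 * L)^-1 * D).
set s3 := (a ^+ 2 * L - a) * B - (a ^+ 2 * L - a) * (iy - ix + (fx - fs) + (2 * L)^-1 * D).
set s4 := a ^+ 2 / 2 * D + N - a * ((ix - (1 - 1 / (a * L)) * iy) / (1 / (a * L)) - ixs).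
set s5 := V0 - N.
have -> : V0 + (a ^+ 2 * L - a) * B - a ^+ 2 * L * (fx - fs) = a * s2 + s3 + s4 + s5.
  by rewrite /s2 /s3 /s4 /s5; field; rewrite ?gt_eqF.
have h2 : 0 <= s2 by rewrite /s2 subr_ge0.
have h3 : 0 <= s3 by rewrite /s3 subr_ge0.
have h4 : 0 <= s4 by rewrite /s4 subr_ge0.
have h5 : 0 <= s5 by rewrite /s5 subr_ge0.
have h6 : 0 <= a * s2 by rewrite mulr_ge0 // ltW.
by apply: addr_ge0 => //; apply: addr_ge0 => //; apply: addr_ge0.
Qed.


Theorem theorem6 (R : realType) (n : nat) (Q : 'M[R]_n) (L : R)
  (f : 'cV[R]_n -> R) (gf : 'cV[R]_n -> 'cV[R]_n)
  (w : 'cV[R]_n -> R) (gw : 'cV[R]_n -> 'cV[R]_n)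
  (xs : 'cV[R]_n) (alpha alphat : nat -> R) (x y z : nat -> 'cV[R]_n) :
  sym_posdef Q ->
  0 < L ->
  is_gradient f gf -> convex_fn f ->
  (forall u v, dnorm Q (gf u - gf v) <= L * qnorm Q (u - v)) ->
  (forall u, f xs <= f u) ->
  is_gradient w gw -> strongly_convex1 Q w gw ->
  (forall k, (1 <= k)%N -> 0 < alpha k) ->
  alpha 1%N = 2 / L ->
  (forall k, (1 <= k)%N ->
     0 <= alpha k.+1 ^+ 2 * L - 2 * alpha k.+1 /\
     alpha k.+1 ^+ 2 * L - 2 * alpha k.+1 <= alpha k ^+ 2 * L) ->
  y 0%N = x 0%N -> z 0%N = x 0%N ->
  (forall k, y k.+1 = x k - L^-1 *: (invmx Q *m gf (x k))) ->
  (forall k u, bregman w gw (z k) (z k.+1) + ip (alpha k.+1 *: gf (x k)) (z k.+1 - x k)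
               <= bregman w gw (z k) u + ip (alpha k.+1 *: gf (x k)) (u - x k)) ->
  (forall k, x k.+1 = (1 - 2 / (alpha k.+2 * L)) *: y k.+1
                      + (2 / (alpha k.+2 * L)) *: z k.+1) ->
  (forall k, (1 <= k)%N -> 0 < alphat k) ->
  alphat 1%N = 1 / L ->
  (forall k, (1 <= k)%N ->
     0 <= alphat k.+1 ^+ 2 * L - alphat k.+1 /\
     alphat k.+1 ^+ 2 * L - alphat k.+1 <= 2^-1 * (alpha k ^+ 2 * L)) ->
  forall k : nat,
    f ((1 - 1 / (alphat k.+1 * L)) *: y k + (1 / (alphat k.+1 * L)) *: z k) - f xs
      <= bregman w gw (x 0%N) xs / (L * alphat k.+1 ^+ 2).
Proof.
move=> HQ L0 Hg Hc Hlip Hm Hw Hsc apos a1 arec y0 z0 ystep zmin xstep atpos at1 atrec k.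
have HL := lip_sq Q L gf HQ L0 Hlip.
pose Hk j := f (x j) - f xs - (2 * L)^-1 * DD Q (gf (x j)).
have Hk0 : forall j, 0 <= Hk j.
  by move=> j; exact: (Hnonneg Q L f gf xs (x j) HQ L0 Hc Hg HL Hm).
have HB : forall j, ip (gf (x j.+1)) (y j.+1 - x j.+1) + (f (x j.+1) - f xs)
     + (2 * L)^-1 * DD Q (gf (x j.+1)) <= Hk j.
  by move=> j; rewrite ystep; exact: (Bbound Q L f gf xs (x j) (x j.+1) HQ L0 Hc Hg HL).
pose E j := alpha j.+1 ^+ 2 * L / 2 * Hk j + bregman w gw (z j.+1) xs.
have EB : forall j, E j <= bregman w gw (z 0%N) xs.
  elim=> [|j IH].
    have a10 : 0 < alpha 1%N by apply: apos.
    have c0 : alpha 1%N ^+ 2 * L / 2 - alpha 1%N = 0 by rewrite a1; field; rewrite gt_eqF.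
    have Ex : x 0%N = (1 - 2 / (alpha 1%N * L)) *: y 0%N + (2 / (alpha 1%N * L)) *: z 0%N.
      have -> : 2 / (alpha 1%N * L) = 1 by rewrite a1; field; rewrite gt_eqF.
      by rewrite subrr scale0r add0r scale1r z0.
    have := step_pot Q L f gf w gw xs (alpha 1%N) (x 0%N) (y 0%N) (z 0%N) (z 1%N) 0
      HQ L0 Hc Hg HL Hm Hw Hsc a10 Ex (zmin 0%N).
    by rewrite c0 !mul0r addr0; apply.
  have a20 : 0 < alpha j.+2 by apply: apos.
  have [r1 r2] := arec j.+1 isT.
  have c0 : 0 <= alpha j.+2 ^+ 2 * L / 2 - alpha j.+2.
    have -> : alpha j.+2 ^+ 2 * L / 2 - alpha j.+2 = (alpha j.+2 ^+ 2 * L - 2 * alpha j.+2) / 2.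
      by field.
    by rewrite divr_ge0.
  have := step_pot Q L f gf w gw xs (alpha j.+2) (x j.+1) (y j.+1) (z j.+1) (z j.+2) (Hk j)
      HQ L0 Hc Hg HL Hm Hw Hsc a20 (xstep j) (zmin j.+1) (ler_wpM2l c0 (HB j)).
  move=> H1; apply: le_trans IH; apply: (le_trans H1).
  rewrite /E addrC lerD2r.
  apply: ler_wpM2r; first exact: Hk0.
  have : alpha j.+2 ^+ 2 * L / 2 - alpha j.+2 = (alpha j.+2 ^+ 2 * L - 2 * alpha j.+2) / 2.
    by field.
  move=> ->; rewrite ler_pdivrMr //.
  by move: r2; move: (alpha j.+2 ^+ 2 * L - 2 * alpha j.+2) (alpha j.+1 ^+ 2 * L) => p q; lra.
have Fin : forall (a B : R) j, 0 < a ->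
   a ^+ 2 * L * (f ((1 - 1 / (a * L)) *: y j + (1 / (a * L)) *: z j) - f xs)
     <= bregman w gw (x 0%N) xs ->
   f ((1 - 1 / (a * L)) *: y j + (1 / (a * L)) *: z j) - f xs
     <= bregman w gw (x 0%N) xs / (L * a ^+ 2).
  move=> a B j a0 H.
  by rewrite ler_pdivlMr ?mulr_gt0 ?exprn_gt0 // mulrC (mulrC L).
case: k => [|j].
  have a10 : 0 < alphat 1%N by apply: atpos.
  apply: (Fin _ 0) => //.
  have c0 : alphat 1%N ^+ 2 * L - alphat 1%N = 0 by rewrite at1; field; rewrite gt_eqF.
  have := final_pot Q L f gf w gw xs (alphat 1%N) (y 0%N) (z 0%N) 0
      HQ L0 Hc Hg HL Hm Hsc a10.
  by rewrite /= c0 !mul0r addr0 z0; apply.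
have a20 : 0 < alphat j.+2 by apply: atpos.
have [r1 r2] := atrec j.+1 isT.
apply: (Fin _ 0) => //.
have := final_pot Q L f gf w gw xs (alphat j.+2) (y j.+1) (z j.+1) (Hk j)
      HQ L0 Hc Hg HL Hm Hsc a20.
move=> /= H1.
set xt := (1 - 1 / (alphat j.+2 * L)) *: y j.+1 + (1 / (alphat j.+2 * L)) *: z j.+1.
have HBt : ip (gf xt) (y j.+1 - xt) + (f xt - f xs) + (2 * L)^-1 * DD Q (gf xt) <= Hk j.
  by rewrite ystep; exact: (Bbound Q L f gf xs (x j) xt HQ L0 Hc Hg HL).
have H2 := H1 (ler_wpM2l r1 HBt).
rewrite -z0; apply: (le_trans H2); apply: le_trans (EB j).
rewrite /E addrC lerD2r.
apply: ler_wpM2r; first exact: Hk0.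
by move: r2; move: (alphat j.+2 ^+ 2 * L - alphat j.+2) (alpha j.+1 ^+ 2 * L) => p q; lra.
Qed.
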